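(* Let $\mathcal{D}\subset\mathbb{R}^d$ be bounded with non-empty interior $\mathcal{D}^\circ$, and let $\mathcal{C}\subset\Gamma\backslash G\times\mathcal{D}^\circ$ be compact. Then there exists $\kappa(\mathcal{C})>0$ such that (i) $F(M,t)<\kappa(\mathcal{C})$ whenever $(\Gamma M,t)\in\mathcal{C}$, and (ii) $F$ is continuous at every $(\Gamma M,t)\in\mathcal{C}$ satisfying \[(\mathbb{Z}^{d+1}M\setminus\{0\})\cap\partial\big((\mathcal{D}-t)\times[0,\kappa(\mathcal{C})]\big)=\emptyset .\]
   Context: Let $G=\operatorname{SL}(d+1,\mathbb{R})$ and $\Gamma=\operatorname{SL}(d+1,\mathbb{Z})$; vectors are row vectors, and $\mathbb{Z}^{d+1}M$ is the lattice spanned by the rows of $M$. For $M\in G$ and $t\in\mathcal{D}$, $F(M,t)=\min\{y>0\mid (x,y)\in\mathbb{Z}^{d+1}M,\ x+t\in\mathcal{D}\}$ (with $x\in\mathbb{R}^d$, $y\in\mathbb{R}$), and $F(M,t)=\infty$ if no minimum exists; $F(M,t)$ depends only on $\Gamma M$, so $F$ is a function on $\Gamma\backslash G\times\mathcal{D}^\circ$. $\mathcal{D}-t=\{x-t\mid x\in\mathcal{D}\}$. *)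

(* Defs.v *)
From HB Require Import structures.
From mathcomp Require Import all_boot all_order all_algebra.
From mathcomp Require Import all_classical all_reals all_analysis.
Set Implicit Arguments. Unset Strict Implicit. Unset Printing Implicit Defensive.
Import Order.TTheory GRing.Theory Num.Theory.
Import numFieldNormedType.Exports.
Local Open Scope classical_set_scope.
Local Open Scope ring_scope.

(* Vectors are row vectors: R^d = 'rV[R]_d, R^(d+1) = 'rV[R]_(d + 1), and a
   vector v of R^(d+1) is written (x, y) with x = lsubmx v in R^d and
   y = rsubmx v 0 0 in R. *)

(* G = SL(d+1, R) *)
Definition inSL (R : realType) (d : nat) (M : 'M[R]_(d + 1)) : Prop := \det M = 1.

(* Gamma = SL(d+1, Z), acting on the left. *)
Definition inSLZ (d : nat) (g : 'M[int]_(d + 1)) : Prop := \det g = 1.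

Definition intmx (R : realType) (m n : nat) (A : 'M[int]_(m, n)) : 'M[R]_(m, n) :=
  map_mx (fun z : int => z%:~R) A.

Definition latpt (R : realType) (d : nat) (M : 'M[R]_(d + 1)) (u : 'rV[int]_(d + 1))
  : 'rV[R]_(d + 1) := intmx R u *m M.

Definition xpart (R : realType) (d : nat) (v : 'rV[R]_(d + 1)) : 'rV[R]_d := lsubmx v.
Definition ypart (R : realType) (d : nat) (v : 'rV[R]_(d + 1)) : R := rsubmx v 0 0.

Definition Fset (R : realType) (d : nat) (D : set 'rV[R]_d)
  (M : 'M[R]_(d + 1)) (t : 'rV[R]_d) : set R :=
  [set y | 0 < y /\ exists u : 'rV[int]_(d + 1),
      ypart (latpt M u) = y /\ D (xpart (latpt M u) + t)].

Definition Ffun (R : realType) (d : nat) (D : set 'rV[R]_d)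
  (M : 'M[R]_(d + 1)) (t : 'rV[R]_d) : \bar R :=
  match pselect (exists y, Fset D M t y /\ forall y', Fset D M t y' -> y <= y') with
  | left h => (projT1 (cid h))%:E
  | right _ => +oo%E
  end.

(* Subsets of Gamma\G x D° are represented by their preimages in G x D°,
   i.e. Gamma-saturated subsets of G x D°. *)
Definition gamma_invariant (R : realType) (d : nat)
  (S : set ('M[R]_(d + 1) * 'rV[R]_d)) : Prop :=
  forall (g : 'M[int]_(d + 1)) (M : 'M[R]_(d + 1)) (t : 'rV[R]_d),
    inSLZ g -> S (M, t) -> S (intmx R g *m M, t).

(* Open subsets of Gamma\G x D° (quotient topology) correspond exactly to the
   traces on G x D° of Gamma-invariant open subsets of the ambient space
   'M_(d+1) x R^d. *)
Definition quot_open (R : realType) (d : nat)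
  (O : set ('M[R]_(d + 1) * 'rV[R]_d)) : Prop :=
  open O /\ gamma_invariant O.

Definition quot_compact (R : realType) (d : nat) (D : set 'rV[R]_d)
  (C : set ('M[R]_(d + 1) * 'rV[R]_d)) : Prop :=
  [/\ (forall M t, C (M, t) -> inSL M /\ (D°) t),
      gamma_invariant C &
      forall (I : Type) (U : I -> set ('M[R]_(d + 1) * 'rV[R]_d)),
        (forall i, quot_open (U i)) ->
        (C `<=` \bigcup_(i in setT) U i) ->
        exists J : set I, finite_set J /\ C `<=` \bigcup_(i in J) U i].

Definition F_continuous_at (R : realType) (d : nat) (D : set 'rV[R]_d)
  (M : 'M[R]_(d + 1)) (t : 'rV[R]_d) : Prop :=
  forall V : set (\bar R), nbhs (Ffun D M t) V ->
    exists O, [/\ quot_open O, O (M, t) &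
      forall M' t', O (M', t') -> inSL M' -> (D°) t' -> V (Ffun D M' t')].

Definition bdry (R : realType) (n : nat) (A : set 'rV[R]_n) : set 'rV[R]_n :=
  closure A `\` A°.

Definition cyl (R : realType) (d : nat) (D : set 'rV[R]_d) (t : 'rV[R]_d) (kappa : R)
  : set 'rV[R]_(d + 1) :=
  [set v | D (xpart v + t) /\ 0 <= ypart v <= kappa].

(* Main.v *)
Require Import Defs.
From HB Require Import structures.
From mathcomp Require Import all_boot all_order all_algebra.
From mathcomp Require Import all_classical all_reals all_analysis.
From mathcomp Require Import ring lra zify finmap.
Import Order.TTheory GRing.Theory Num.Theory.
Import numFieldNormedType.Exports.
Local Open Scope classical_set_scope.
Local Open Scope ring_scope.
Set Implicit Arguments. Unset Strict Implicit. Unset Printing Implicit Defensive.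
Section Norms.
Variable R : realType.

Lemma mx_entry_le m n (A : 'M[R]_(m, n)) i j : `|A i j| <= `|A|.
Proof.
by rewrite [leRHS]/Num.Def.normr /= mx_normrE; apply/bigmax_geP; right => /=; exists (i, j).
Qed.

Lemma mx_norm_leP m n (A : 'M[R]_(m, n)) e :
  0 <= e -> (forall i j, `|A i j| <= e) -> `|A| <= e.
Proof.
move=> e0 H; rewrite [leLHS]/Num.Def.normr /= mx_normrE.
by apply: bigmax_le => // -[i j] _; exact: H.
Qed.

Lemma mulmx_norm m k n (A : 'M[R]_(m, k)) (B : 'M[R]_(k, n)) :
  `|A *m B| <= k%:R * (`|A| * `|B|).
Proof.
apply: mx_norm_leP; first by rewrite mulr_ge0 // mulr_ge0.
move=> i j; rewrite mxE; apply: le_trans (ler_norm_sum _ _ _) _.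
apply: le_trans (_ : _ <= \sum_(l < k) (`|A| * `|B|)) _; last first.
  by rewrite sumr_const card_ord mulr_natl.
apply: ler_sum => l _.
by rewrite normrM; apply: ler_pM => //; apply: mx_entry_le.
Qed.

Lemma rv_norm_split d (v : 'rV[R]_(d + 1)) :
  `|v| <= `|lsubmx v| + `|rsubmx v|.
Proof.
apply: mx_norm_leP; first by rewrite addr_ge0.
move=> i j; rewrite -[v]hsubmxK; case: (split_ordP j) => k ->.
  by rewrite row_mxEl hsubmxK; apply: ler_wpDr => //; apply: mx_entry_le.
by rewrite row_mxEr hsubmxK; apply: ler_wpDl => //; apply: mx_entry_le.
Qed.

Lemma ypart_norm d (v : 'rV[R]_(d + 1)) : `|rsubmx v| = `|ypart v|.
Proof.
apply/eqP; rewrite eq_le; apply/andP; split.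
  apply: mx_norm_leP => // i j; by rewrite !ord1.
exact: mx_entry_le.
Qed.

End Norms.
Section Lattice.
Variable R : realType.
Variable d : nat.
Local Notation n := (d + 1)%N.

Lemma intmxM m k p (A : 'M[int]_(m, k)) (B : 'M[int]_(k, p)) :
  intmx R (A *m B) = intmx R A *m intmx R B.
Proof. by rewrite /intmx map_mxM. Qed.

Lemma intmxB m k (A B : 'M[int]_(m, k)) :
  intmx R (A - B) = intmx R A - intmx R B.
Proof. by rewrite /intmx map_mxB. Qed.

Lemma intmxN m k (A : 'M[int]_(m, k)) : intmx R (- A) = - intmx R A.
Proof. by rewrite /intmx map_mxN. Qed.

Lemma intmx1 : intmx R (1%:M : 'M[int]_n) = 1%:M.
Proof. by rewrite /intmx map_mx1. Qed.

Lemma det_intmx (g : 'M[int]_n) : \det (intmx R g) = (\det g)%:~R.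
Proof. by rewrite /intmx det_map_mx. Qed.

Lemma intmx_eq0 m k (A : 'M[int]_(m, k)) : (intmx R A == 0) = (A == 0).
Proof.
apply/eqP/eqP => [H|->]; last by rewrite /intmx map_mx0.
apply/matrixP => i j; have := congr1 (fun B : 'M[R]_(m, k) => B i j) H.
by rewrite /intmx !mxE => /eqP; rewrite intr_eq0 => /eqP.
Qed.

Lemma intmx_ge1 m k (A : 'M[int]_(m, k)) : A != 0 -> 1 <= `|intmx R A|.
Proof.
move=> /eqP A0.
have [i [j Aij]] : exists i j, A i j != 0.
  apply/not_existsP => H; apply: A0; apply/matrixP => i j; rewrite mxE.
  by apply/eqP; apply/negPn/negP => Hn; apply: (H i); exists j.
apply: le_trans (mx_entry_le _ i j); rewrite /intmx mxE -intr_norm.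
rewrite ler1z; lia.
Qed.

Lemma latpt_mul (g : 'M[int]_n) (M : 'M[R]_n) u :
  latpt (intmx R g *m M) u = latpt M (u *m g).
Proof. by rewrite /latpt intmxM mulmxA. Qed.

Lemma latptN (M : 'M[R]_n) (u : 'rV[int]_n) : latpt M (- u) = - latpt M u.
Proof. by rewrite /latpt intmxN mulNmx. Qed.

Lemma latptB (M : 'M[R]_n) (u v : 'rV[int]_n) : latpt M (u - v) = latpt M u - latpt M v.
Proof. by rewrite /latpt intmxB mulmxBl. Qed.

Lemma latpt_diff (M M' : 'M[R]_n) u :
  `|latpt M' u - latpt M u| <= n%:R * (`|intmx R u| * `|M' - M|).
Proof. by rewrite /latpt -mulmxBr; apply: mulmx_norm. Qed.

Lemma intmx_bound (M : 'M[R]_n) u : M \in unitmx ->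
  `|intmx R u| <= n%:R * (`|latpt M u| * `|invmx M|).
Proof.
move=> Mu; have -> : intmx R u = latpt M u *m invmx M by rewrite /latpt mulmxK.
exact: mulmx_norm.
Qed.

Definition enc (K : nat) (f : {ffun 'I_n -> 'I_(K.*2.+1)}) : 'rV[int]_n :=
  \row_j ((f j : nat)%:Z - K%:Z).

Lemma enc_surj (K : nat) (u : 'rV[int]_n) :
  (forall j, `|(u ord0 j)%:~R : R| <= K%:R) -> exists f, u = @enc K f.
Proof.
move=> H.
have Hj : forall j : 'I_n, (absz (u ord0 j + K%:Z)%R < K.*2.+1)%N.
  move=> j; have := H j; rewrite -intr_norm -[K%:R]/((K%:Z)%:~R) ler_int => h.
  rewrite -muln2; lia.
exists [ffun j => Ordinal (Hj j)]; apply/matrixP => i j.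
rewrite !mxE ffunE /= (ord1 i).
change (u ord0 j = (`|(u ord0 j + K%:Z)%R|%N)%:Z - K%:Z).
have := H j; rewrite -intr_norm -[K%:R]/((K%:Z)%:~R) ler_int => h.
lia.
Qed.

End Lattice.
Section Ffacts.
Variable R : realType.
Variable d : nat.
Local Notation n := (d + 1)%N.
Implicit Types (D : set 'rV[R]_d) (M : 'M[R]_n) (t : 'rV[R]_d).

Lemma fin_argmin (I : finType) (P : I -> Prop) (f : I -> R) :
  (exists i, P i) -> exists i, P i /\ forall j, P j -> f i <= f j.
Proof.
case=> i0 Pi0.
have : (fun i => `[< P i >]) i0 by apply/asboolP.
move=> /(@arg_minP _ R I i0 (fun i => `[< P i >]) f).
case=> i /asboolP Pi Hm; exists i; split => // j Pj.
by apply: Hm; apply/asboolP.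
Qed.

Lemma Ffun_fin D M t y : Ffun D M t = y%:E ->
  Fset D M t y /\ forall y', Fset D M t y' -> y <= y'.
Proof.
rewrite /Ffun; case: pselect => // h [<-].
by case: (cid h).
Qed.

Lemma Ffun_eq D M t y : Fset D M t y -> (forall y', Fset D M t y' -> y <= y') ->
  Ffun D M t = y%:E.
Proof.
move=> Fy Hy; rewrite /Ffun; case: pselect => [h|[]]; last by exists y.
case: (cid h) => /= m [Fm Hm]; congr (_%:E).
by apply/eqP; rewrite eq_le Hm // Hy.
Qed.

Lemma inSLZ_unit (g : 'M[int]_n) : inSLZ g -> g \in unitmx.
Proof. by rewrite /inSLZ unitmxE => ->; rewrite unitr1. Qed.

Lemma inSLZ_inv (g : 'M[int]_n) : inSLZ g -> inSLZ (invmx g).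
Proof. by move=> H; rewrite /inSLZ det_inv H invr1. Qed.

Lemma inSLZ_mul (g h : 'M[int]_n) : inSLZ g -> inSLZ h -> inSLZ (g *m h).
Proof. by rewrite /inSLZ det_mulmx => -> ->; rewrite mulr1. Qed.

Lemma inSL_mul (g : 'M[int]_n) M : inSLZ g -> inSL M -> inSL (intmx R g *m M).
Proof. by rewrite /inSLZ /inSL det_mulmx det_intmx => -> ->; rewrite mulr1. Qed.

Lemma inSL_unit M : inSL M -> M \in unitmx.
Proof. by rewrite /inSL unitmxE => ->; rewrite unitr1. Qed.

Lemma Fset_inv D (g : 'M[int]_n) M t : inSLZ g ->
  Fset D (intmx R g *m M) t = Fset D M t.
Proof.
move=> Hg; apply/seteqP; split => y [y0 [u [Hu1 Hu2]]]; split => //.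
  by exists (u *m g); rewrite -latpt_mul.
exists (u *m invmx g); rewrite latpt_mul -mulmxA mulVmx ?mulmx1 //.
exact: inSLZ_unit.
Qed.

Lemma Ffun_inv D (g : 'M[int]_n) M t : inSLZ g ->
  Ffun D (intmx R g *m M) t = Ffun D M t.
Proof. by move=> Hg; rewrite /Ffun Fset_inv. Qed.

Lemma bounded_rho D : bounded_set D -> exists rho : R, forall x, D x -> `|x| <= rho.
Proof.
case=> r [_ Hr]; exists (r + 1) => x Dx.
by apply: (Hr (r + 1)) => //; rewrite ltrDl.
Qed.

Lemma Ffun_attained D M t y0 : bounded_set D -> M \in unitmx -> Fset D M t y0 ->
  exists m, [/\ Fset D M t m, m <= y0 & Ffun D M t = m%:E].
Proof.
move=> /bounded_rho [rho Hrho] Mu Fy0.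
pose B := rho + `|t| + y0.
pose K := (Num.truncn (n%:R * (B * `|invmx M|))).+1.
have Hb : forall u : 'rV[int]_n, 0 < ypart (latpt M u) -> ypart (latpt M u) <= y0 ->
    D (xpart (latpt M u) + t) -> exists f, u = @enc d K f.
  move=> u Y0 Yy0 Du; apply: enc_surj => j.
  have hx : `|xpart (latpt M u)| <= rho + `|t|.
    have := Hrho _ Du; have := ler_normB (xpart (latpt M u) + t) t.
    rewrite addrK => h1 h2; apply: le_trans h1 _.
    by apply: lerD => //.
  have hl : `|latpt M u| <= B.
    apply: le_trans (rv_norm_split _) _.
    rewrite ypart_norm /B; apply: lerD; first exact: hx.
    by rewrite ger0_norm // ltW.
  have hi := intmx_bound u Mu.
  have he : `|(u ord0 j)%:~R : R| <= `|intmx R u|.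
    by have := mx_entry_le (intmx R u) ord0 j; rewrite /intmx mxE.
  apply: le_trans he _; apply: le_trans hi _.
  apply: le_trans (ltW (truncnS_gt _)).
  apply: ler_wpM2l => //; apply: ler_wpM2r => //.
have [f0 [Pf0 Hf0]] : exists f, 
   (fun f => 0 < ypart (latpt M (@enc d K f)) /\ ypart (latpt M (@enc d K f)) <= y0 /\
          D (xpart (latpt M (@enc d K f)) + t)) f /\
   forall g, (fun f => 0 < ypart (latpt M (@enc d K f)) /\ ypart (latpt M (@enc d K f)) <= y0 /\
          D (xpart (latpt M (@enc d K f)) + t)) g ->
     ypart (latpt M (@enc d K f)) <= ypart (latpt M (@enc d K g)).
  apply: fin_argmin.
  case: Fy0 => y0pos [u [Yu Du]].
  have [f Hf] : exists f, u = @enc d K f by apply: Hb; rewrite ?Yu.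
  by exists f; rewrite -Hf Yu.
case: Pf0 => P1 [P2 P3].
have Fm : Fset D M t (ypart (latpt M (@enc d K f0))).
  by split => //; exists (@enc d K f0).
exists (ypart (latpt M (@enc d K f0))); split => //.
apply: Ffun_eq => // y' [y'pos [u [Yu Du]]].
have [lt|ge] := ltP y0 y'; first by apply: le_trans P2 (ltW lt).
have [f Hf] : exists f, u = @enc d K f by apply: Hb; rewrite ?Yu.
rewrite -Yu Hf; apply: Hf0; rewrite -Hf Yu; split => //; split => //.
Qed.

End Ffacts.
Section Topo.
Variable R : realType.
Variable d : nat.
Local Notation n := (d + 1)%N.

Definition nearMt (M : 'M[R]_n) (t : 'rV[R]_d) (P : 'M[R]_n -> 'rV[R]_d -> Prop) :=
  exists2 e : R, 0 < e & forall M' t', `|M' - M| < e -> `|t' - t| < e -> P M' t'.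

Lemma nearMt_nbhs M t P : nearMt M t P -> nbhs (M, t) [set p | P p.1 p.2].
Proof.
case=> e e0 H; apply/nbhs_ballP; exists e => // -[M' t'] [/= b1 b2].
move: b1 b2; rewrite -!ball_normE /ball_ /= => b1 b2.
by apply: H; rewrite distrC.
Qed.

Lemma nbhs_nearMt M t (A : set ('M[R]_n * 'rV[R]_d)) :
  nbhs (M, t) A -> nearMt M t (fun M' t' => A (M', t')).
Proof.
move/nbhs_ballP => [e e0 H]; exists e => // M' t' h1 h2.
apply: H; split => /=; rewrite -ball_normE /ball_ /= distrC //.
Qed.

Lemma nearMt_impl M t (P Q : 'M[R]_n -> 'rV[R]_d -> Prop) :
  (forall M' t', P M' t' -> Q M' t') -> nearMt M t P -> nearMt M t Q.
Proof. by move=> H [e e0 HP]; exists e => // M' t' h1 h2; apply: H; apply: HP. Qed.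

Lemma nearMt_and M t P Q : nearMt M t P -> nearMt M t Q ->
  nearMt M t (fun M' t' => P M' t' /\ Q M' t').
Proof.
case=> e1 e10 H1 [e2 e20 H2]; exists (Num.min e1 e2); first by rewrite lt_min e10.
move=> M' t'; rewrite !lt_min => /andP[a1 a2] /andP[b1 b2]; split.
  exact: H1.
exact: H2.
Qed.

Lemma nearMt_fin M t (I : finType) (P : I -> 'M[R]_n -> 'rV[R]_d -> Prop) :
  (forall i, nearMt M t (P i)) -> nearMt M t (fun M' t' => forall i, P i M' t').
Proof.
move=> H.
have := @filter_forall _ I (fun i => [set p : 'M[R]_n * 'rV[R]_d | P i p.1 p.2])
  (nbhs (M, t)) _ (fun i => nearMt_nbhs (H i)) => h.
have h' : \forall x \near nbhs (M, t), forall i : I, [set p | P i p.1 p.2] x.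
  by apply: h; apply: nbhs_filter.
exact: (@nbhs_nearMt M t (fun p => forall i, P i p.1 p.2) h').
Qed.

Lemma nearMt_lip M t (f : 'M[R]_n -> 'rV[R]_d -> R) (c : R) (a : R) :
  0 <= c -> (forall M' t', `|f M' t' - f M t| <= c * (`|M' - M| + `|t' - t|)) ->
  f M t < a -> nearMt M t (fun M' t' => f M' t' < a).
Proof.
move=> c0 Hf fa.
pose e := (a - f M t) / (2 * c + 1).
have e0 : 0 < e by rewrite /e divr_gt0 // ?subr_gt0 //; lra.
exists e => // M' t' h1 h2.
have h := Hf M' t'.
have : c * (`|M' - M| + `|t' - t|) <= c * (2 * e).
  by apply: ler_wpM2l => //; lra.
have he : e * (2 * c + 1) = a - f M t.
  by rewrite /e divfK //; apply/negP => /eqP; lra.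
have : c * (2 * e) < a - f M t by rewrite -he; nra.
move: h; rewrite ler_norml => /andP[_ h] h3 h4; lra.
Qed.

Definition sat (A : set ('M[R]_n * 'rV[R]_d)) : set ('M[R]_n * 'rV[R]_d) :=
  [set p | exists g, inSLZ g /\ A° (intmx R g *m p.1, p.2)].

Lemma inSLZ1 : inSLZ (1%:M : 'M[int]_n).
Proof. by rewrite /inSLZ det1. Qed.

Lemma sat_mem A M t : nbhs (M, t) A -> sat A (M, t).
Proof. by move=> H; exists 1%:M; split; [exact: inSLZ1|rewrite intmx1 mul1mx]. Qed.

Lemma sat_elim A M t : sat A (M, t) -> exists g, inSLZ g /\ A (intmx R g *m M, t).
Proof. by case=> g [Hg HA]; exists g; split => //; apply: interior_subset. Qed.

Lemma sat_open A : quot_open (sat A).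
Proof.
split.
  rewrite openE => -[M t] [g [Hg HA]].
  have := nbhs_interior HA => /nbhs_ballP [e e0 He].
  apply/nbhs_ballP; exists (e / (n%:R * `|intmx R g| + 1)).
    by rewrite /= divr_gt0 // ltr_wpDl // mulr_ge0.
  move=> [M' t'] [/= b1 b2]; move: b1 b2; rewrite -!ball_normE /ball_ /= => b1 b2.
  exists g; split => //; apply: He; split; rewrite -ball_normE /ball_ /=.
    rewrite -mulmxBr; apply: le_lt_trans (mulmx_norm _ _) _.
    have hp : 0 < n%:R * `|intmx R g| + 1 by rewrite ltr_wpDl // mulr_ge0.
    move: b1; rewrite ltr_pdivlMr // => b1.
    have : 0 <= `|M - M'| by exact: normr_ge0.
    have : 0 <= n%:R * `|intmx R g| by rewrite mulr_ge0.
    move=> h1 h2; rewrite mulrA; nra.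
  apply: lt_le_trans b2 _; rewrite ler_pdivrMr ?ler_peMr //.
  - exact: ltW.
  - by rewrite lerDr mulr_ge0.
move=> h M t Hh [g [Hg HA]]; exists (g *m invmx h); split.
  by apply: inSLZ_mul => //; apply: inSLZ_inv.
rewrite /= mulmxA -intmxM -mulmxA mulVmx ?mulmx1 //; exact: inSLZ_unit.
Qed.

End Topo.
Section PH.
Variable R : realType.
Variable d : nat.
Local Notation n := (d + 1)%N.

Lemma xpart_le (v : 'rV[R]_n) : `|xpart v| <= `|v|.
Proof. by apply: mx_norm_leP => // i j; rewrite /xpart mxE; apply: mx_entry_le. Qed.

Lemma xpartB (v w : 'rV[R]_n) j : xpart (v - w) ord0 j = xpart v ord0 j - xpart w ord0 j.
Proof. by rewrite /xpart !mxE. Qed.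

Lemma xpartN (v : 'rV[R]_n) : xpart (- v) = - xpart v.
Proof. by apply/matrixP => i j; rewrite /xpart !mxE. Qed.

Lemma ypartN (v : 'rV[R]_n) : ypart (- v) = - ypart v.
Proof. by rewrite /ypart !mxE. Qed.

Lemma lerX_nneg (x y : R) k : 0 <= x -> x <= y -> x ^+ k <= y ^+ k.
Proof.
move=> x0 xy; apply: (lterXn2r R).1; rewrite ?nnegrE //.
exact: le_trans xy.
Qed.

Definition uf N (f : {ffun 'I_n -> 'I_N.+1}) : 'rV[int]_n := \row_i ((f i : nat)%:Z).

Lemma uf_norm N f : `|intmx R (@uf N f)| <= N%:R.
Proof.
apply: mx_norm_leP => // i j; rewrite /intmx /uf !mxE.
change (`|((f j : nat)%:R : R)| <= N%:R).
by rewrite ger0_norm // ler_nat -ltnS.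
Qed.

Lemma ph_core (M : 'M[R]_n) (s : R) : 0 < s ->
  exists w : 'rV[int]_n, w != 0 /\ forall j, `|xpart (latpt M w) ord0 j| < s.
Proof.
move=> s0.
pose A0 := `|M|.
have A00 : 0 <= A0 by exact: normr_ge0.
pose c0 := (2 * (n%:R * A0) + 2) / s + 1.
have c01 : 1 <= c0.
  rewrite /c0 lerDr; apply: divr_ge0; last exact: ltW.
  by apply: addr_ge0 => //; apply: mulr_ge0 => //; apply: mulr_ge0.
pose N := (Num.truncn (c0 ^+ d)).+1.
pose T := n%:R * N%:R * A0 + 1.
have T0 : 0 < T by rewrite /T ltr_wpDl // mulr_ge0 // mulr_ge0.
pose P := (Num.truncn (2 * T / s)).+1.
pose x (f : {ffun 'I_n -> 'I_N.+1}) j := xpart (latpt M (uf f)) ord0 j.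
have hx : forall f j, `|x f j| < T.
  move=> f j; apply: le_lt_trans (mx_entry_le _ _ _) _.
  apply: le_lt_trans (xpart_le _) _.
  apply: le_lt_trans (mulmx_norm _ _) _.
  rewrite /T -mulrA; apply: ltr_pwDr => //.
  apply: ler_wpM2l => //; apply: ler_wpM2r => //; exact: uf_norm.
pose k f j := Num.truncn ((x f j + T) / s).
have hk : forall f j, (k f j < P)%N.
  move=> f j; rewrite /P ltnS; apply: le_truncn.
  rewrite ler_pM2r ?invr_gt0 //.
  by have := hx f j; rewrite ltr_norml => /andP[_ h]; lra.
pose h (f : {ffun 'I_n -> 'I_N.+1}) : {ffun 'I_d -> 'I_P} := [ffun j => Ordinal (hk f j)].
have hcard : (P ^ d < N.+1 ^ n)%N.
  rewrite -(ltr_nat R) !natrX.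
  have hP : P%:R <= N%:R * c0.
    rewrite /P -addn1 natrD.
    apply: le_trans (_ : 2 * T / s + 1 <= _).
      rewrite lerD2r truncn_le; apply: divr_ge0; last exact: ltW.
      by apply: mulr_ge0 => //; exact: ltW.
    have hN1 : 1 <= N%:R :> R by rewrite ler1n.
    rewrite /c0 /T.
    have hn0 : 0 <= n%:R :> R by exact: ler0n.
    have e1 : 2 * (n%:R * N%:R * A0) + 2 <= N%:R * (2 * (n%:R * A0) + 2).
      have : 0 <= n%:R * A0 by rewrite mulr_ge0.
      move=> hh; rewrite (mulrC (n%:R) (N%:R)) -(mulrA (N%:R)); nra.
    apply: le_trans (_ : N%:R * (2 * (n%:R * A0) + 2) / s + 1 <= _).
      rewrite lerD2r ler_pM2r ?invr_gt0 //; apply: le_trans e1; lra.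
    rewrite [X in _ <= X]mulrDr mulr1 mulrA; lra.
  have hN : c0 ^+ d < N%:R by rewrite /N truncnS_gt.
  apply: le_lt_trans (lerX_nneg d _ hP) _; first by rewrite ler0n.
  rewrite exprMn.
  apply: (@lt_le_trans _ _ (N%:R ^+ d * N%:R : R)).
    by rewrite ltr_pM2l // exprn_gt0 // ltr0n.
  rewrite -exprSr addn1; apply: lerX_nneg; first exact: ler0n.
  by rewrite ler_nat.
have /injectivePn [f1 [f2 ne heq]] : ~~ injectiveb h.
  apply/negP => /injectiveP inj; have := @leq_card _ _ h inj.
  by rewrite !card_ffun !card_ord leqNgt hcard.
exists (uf f1 - uf f2); split.
  apply/negP => /eqP H; move/negP: ne; apply; apply/eqP/ffunP => i; apply/val_inj.
  have := congr1 (fun F : 'rV[int]_n => F ord0 i) H; rewrite /uf !mxE => /eqP.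
  by rewrite subr_eq0 => /eqP [].
move=> j; have := congr1 (fun F : {ffun 'I_d -> 'I_P} => F j) heq; rewrite !ffunE => /(congr1 val) /= ke.
rewrite latptB xpartB -/(x f1 j) -/(x f2 j).
have a0 : 0 <= (x f1 j + T) / s.
  by have := hx f1 j; rewrite ltr_norml => /andP[h1 _]; rewrite divr_ge0 ?ltW //; lra.
have b0 : 0 <= (x f2 j + T) / s.
  by have := hx f2 j; rewrite ltr_norml => /andP[h1 _]; rewrite divr_ge0 ?ltW //; lra.
have := truncn_itv a0; have := truncn_itv b0.
rewrite -/(k f1 j) -/(k f2 j) ke.
set m := (k f2 j)%:R.
move=> /andP[hb1 hb2] /andP[ha1 ha2].
have ha : (x f1 j + T) / s * s = x f1 j + T by rewrite divfK // gt_eqF.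
have hb : (x f2 j + T) / s * s = x f2 j + T by rewrite divfK // gt_eqF.
move: ha hb ha1 ha2 hb1 hb2.
set a := (x f1 j + T) / s; set b := (x f2 j + T) / s.
move=> ha hb ha1 ha2 hb1 hb2.
rewrite ltr_norml; apply/andP; split; nra.
Qed.

Lemma PH (M : 'M[R]_n) (r : R) : M \in unitmx -> 0 < r ->
  exists u, 0 < ypart (latpt M u) /\ `|xpart (latpt M u)| < r.
Proof.
move=> Mu r0.
pose c := 1 / (n%:R * (`|invmx M| + 1)).
have hn : 0 < n%:R * (`|invmx M| + 1) :> R.
  by rewrite mulr_gt0 // ?ltr0n ?addn1 // ltr_wpDl.
have c0 : 0 < c by rewrite /c divr_gt0.
have hc : forall w, w != 0 -> c <= `|latpt M w|.
  move=> w w0; have h1 := intmx_ge1 R w0; have h2 := intmx_bound w Mu.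
  rewrite /c ler_pdivrMr //.
  have : 0 <= `|latpt M w| by exact: normr_ge0.
  have : 0 <= `|invmx M| by exact: normr_ge0.
  have : 0 <= n%:R :> R by exact: ler0n.
  move=> a1 a2 a3; nra.
pose s := Num.min r c / 2.
have s0 : 0 < s by rewrite /s divr_gt0 // lt_min r0.
have m1 : Num.min r c <= r by rewrite ge_min lexx.
have m2 : Num.min r c <= c by rewrite ge_min lexx orbT.
have sr : s < r by rewrite /s; lra.
have sc : s < c by rewrite /s; lra.
have [w [w0 hw]] := ph_core M s0.
have hxw : `|xpart (latpt M w)| <= s.
  by apply: mx_norm_leP => [|i j]; [exact: ltW|rewrite (ord1 i); exact: ltW].
have [ylt|ygt|yeq] := ltgtP (ypart (latpt M w)) 0.
- exists (- w); rewrite latptN xpartN ypartN normrN; split; last lra.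
  by rewrite oppr_gt0.
- by exists w; split => //; lra.
- exfalso; have := hc w w0; have := rv_norm_split (latpt M w).
  rewrite ypart_norm yeq normr0 addr0 => h1 h2.
  have := le_trans h2 h1; rewrite -/(xpart _) => h3; lra.
Qed.

End PH.
Section Near.
Variable R : realType.
Variable d : nat.
Local Notation n := (d + 1)%N.

Definition Wv (u : 'rV[int]_n) (M' : 'M[R]_n) (t' t : 'rV[R]_d) : 'rV[R]_n :=
  latpt M' u + row_mx (t' - t) 0.

Lemma xpart_Wv u M' t' t : xpart (Wv u M' t' t) + t = xpart (latpt M' u) + t'.
Proof.
rewrite /Wv /xpart linearD /= row_mxKl.
by rewrite -addrA subrK.
Qed.

Lemma ypart_Wv u M' t' t : ypart (Wv u M' t' t) = ypart (latpt M' u).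
Proof. by rewrite /Wv /ypart linearD /= row_mxKr addr0. Qed.

Lemma Wv_self u M t : Wv u M t t = latpt M u.
Proof. by rewrite /Wv subrr row_mx0 addr0. Qed.

Lemma row_mx0_norm (a : 'rV[R]_d) : `|row_mx a (0 : 'rV[R]_1)| <= `|a|.
Proof.
apply: le_trans (rv_norm_split _) _.
by rewrite row_mxKl row_mxKr normr0 addr0.
Qed.

Lemma Wv_dist u M M' t' t :
  `|Wv u M' t' t - latpt M u| <= n%:R * `|intmx R u| * `|M' - M| + `|t' - t|.
Proof.
rewrite /Wv addrAC; apply: le_trans (ler_normD _ _) _.
apply: lerD; first by rewrite -mulrA; apply: latpt_diff.
exact: row_mx0_norm.
Qed.

Lemma ypart_dist (v w : 'rV[R]_n) : `|ypart v - ypart w| <= `|v - w|.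
Proof.
have -> : ypart v - ypart w = (v - w) 0 (rshift d 0).
  by rewrite /ypart !mxE.
exact: mx_entry_le.
Qed.

Lemma xpart_add (v w : 'rV[R]_n) : xpart w = xpart v + xpart (w - v).
Proof. by apply/matrixP => i j; rewrite /xpart !mxE addrC subrK. Qed.

Lemma near_Wv (M : 'M[R]_n) t u (S : set 'rV[R]_n) :
  (exists2 del : R, 0 < del & forall w, `|w - latpt M u| < del -> S w) ->
  nearMt M t (fun M' t' => S (Wv u M' t' t)).
Proof.
case=> del del0 H.
have := @nearMt_lip R d M t (fun M' t' => `|Wv u M' t' t - latpt M u|)
  (n%:R * `|intmx R u| + 1) del.
have c0 : 0 <= n%:R * `|intmx R u| + 1 by rewrite addr_ge0 // mulr_ge0.
move=> /(_ c0) []; last by move=> e e0 He; exists e => // M' t' h1 h2; apply: H; apply: He.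
- move=> M' t'; rewrite Wv_self subrr normr0 subr0 normr_id.
  apply: le_trans (Wv_dist u M M' t' t) _.
  have : 0 <= `|M' - M| by exact: normr_ge0.
  have : 0 <= `|t' - t| by exact: normr_ge0.
  have : 0 <= n%:R * `|intmx R u| by rewrite mulr_ge0.
  move=> a1 a2 a3; nra.
- by rewrite Wv_self subrr normr0.
Qed.

Lemma near_Ylt (M : 'M[R]_n) t u (a : R) :
  ypart (latpt M u) < a -> nearMt M t (fun M' t' => ypart (latpt M' u) < a).
Proof.
move=> Ha.
have := @near_Wv M t u [set w | ypart w < a].
rewrite /nearMt => [] []; last first.
  by move=> e e0 He; exists e => // M' t' h1 h2; have := He M' t' h1 h2; rewrite /= ypart_Wv.
exists (a - ypart (latpt M u)); first by rewrite subr_gt0.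
move=> w hw /=; have := ypart_dist w (latpt M u).
rewrite ler_norml => /andP[_ h]; lra.
Qed.

Lemma near_Ygt (M : 'M[R]_n) t u (a : R) :
  a < ypart (latpt M u) -> nearMt M t (fun M' t' => a < ypart (latpt M' u)).
Proof.
move=> Ha.
have := @near_Wv M t u [set w | a < ypart w].
rewrite /nearMt => [] []; last first.
  by move=> e e0 He; exists e => // M' t' h1 h2; have := He M' t' h1 h2; rewrite /= ypart_Wv.
exists (ypart (latpt M u) - a); first by rewrite subr_gt0.
move=> w hw /=; have := ypart_dist w (latpt M u).
rewrite ler_norml => /andP[h _]; lra.
Qed.

Lemma near_dM (M : 'M[R]_n) (t : 'rV[R]_d) (a : R) : 0 < a ->
  nearMt M t (fun M' t' => `|M' - M| < a /\ `|t' - t| < a).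
Proof. by move=> a0; exists a => // M' t' h1 h2. Qed.

Lemma nbhs_ball_rv m k (v : 'M[R]_(m, k)) (S : set 'M[R]_(m, k)) : nbhs v S ->
  exists2 del : R, 0 < del & forall w, `|w - v| < del -> S w.
Proof.
move/nbhs_ballP => [e e0 He]; exists e => // w hw; apply: He.
by rewrite -ball_normE /ball_ /= distrC.
Qed.

End Near.
Section Main.
Variable R : realType.
Variable d : nat.
Local Notation n := (d + 1)%N.

Lemma L1near (D : set 'rV[R]_d) (M : 'M[R]_n) t : bounded_set D -> inSL M -> (D°) t ->
  exists b : R, nearMt M t (fun M' t' => inSL M' -> (Ffun D M' t' < b%:E)%E).
Proof.
move=> hDb hM hDt; have Mu := inSL_unit hM.
have [r r0 Hr] := nbhs_ball_rv hDt.
have [u [Y0 Xr]] := PH Mu r0.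
set v := latpt M u in Y0 Xr.
exists (2 * ypart v + 1).
pose del := Num.min (r - `|xpart v|) (ypart v).
have del0 : 0 < del by rewrite lt_min subr_gt0 Xr.
have dl1 : del <= r - `|xpart v| by rewrite ge_min lexx.
have dl2 : del <= ypart v by rewrite ge_min lexx orbT.
have := @near_Wv R d M t u
  [set w | D (xpart w + t) /\ 0 < ypart w /\ ypart w < 2 * ypart v + 1].
case.
  exists del => // w hw; split.
    apply: Hr; rewrite addrK (xpart_add v w).
    apply: le_lt_trans (ler_normD _ _) _.
    have := xpart_le (w - v); lra.
  have := ypart_dist w v; rewrite ler_norml => /andP[h1 h2]; split; lra.
move=> e e0 He; exists e => // M' t' h1 h2 hM'.
have [hD [hy1 hy2]] := He M' t' h1 h2.
rewrite xpart_Wv ypart_Wv in hD hy1 hy2.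
have Fy : Fset D M' t' (ypart (latpt M' u)) by split => //; exists u.
have [m [_ hm ->]] := Ffun_attained hDb (inSL_unit hM') Fy.
by rewrite lte_fin; lra.
Qed.

Lemma claim_u (D : set 'rV[R]_d) (M : 'M[R]_n) t (kap y0 eps : R) u :
  M \in unitmx -> (forall y, Fset D M t y -> y0 <= y) -> y0 < kap -> 0 < eps ->
  (latpt M u != 0 -> ~ bdry (cyl D t kap) (latpt M u)) ->
  nearMt M t (fun M' t' => 0 < ypart (latpt M' u) ->
     D (xpart (latpt M' u) + t') -> y0 - eps < ypart (latpt M' u)).
Proof.
move=> Mu hmin hk e0 hyp.
have [v0|vn0] := eqVneq (latpt M u) 0.
  have iu : intmx R u = 0.
    by rewrite -(mulmxK Mu (intmx R u)) -/(latpt M u) v0 mul0mx.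
  exists 1 => // M' t' _ _; rewrite /latpt iu mul0mx /ypart linear0 mxE ltxx //.
have hb := hyp vn0.
have [hcl|hncl] := pselect (closure (cyl D t kap) (latpt M u)).
  have hint : (cyl D t kap)° (latpt M u).
    by apply: contrapT => hn; apply: hb; split.
  have hcyl := interior_subset hint.
  have [del del0 Hdel] := nbhs_ball_rv hint.
  pose c : 'rV[R]_1 := const_mx (del / 2).
  have hw := Hdel (latpt M u - row_mx 0 c).
  have hc : `|row_mx (0 : 'rV[R]_d) c| <= del / 2.
    apply: le_trans (rv_norm_split _) _; rewrite row_mxKl row_mxKr normr0 add0r.
    apply: mx_norm_leP => [|i j]; first by rewrite divr_ge0 // ltW.
    by rewrite mxE ger0_norm // divr_ge0 // ltW.
  have : cyl D t kap (latpt M u - row_mx 0 c).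
    apply: hw; rewrite addrAC subrr add0r normrN; apply: le_lt_trans hc _.
    by rewrite ltr_pdivrMr //; lra.
  case=> _ /andP[hy _].
  have hY : ypart (latpt M u - row_mx 0 c) = ypart (latpt M u) - del / 2.
    by rewrite /ypart linearB /= row_mxKr !mxE.
  rewrite hY in hy.
  have hF : Fset D M t (ypart (latpt M u)).
    split; first by lra.
    by exists u; split => //; case: hcyl.
  have := hmin _ hF => hy0.
  apply: (nearMt_impl _ (near_Ygt t (_ : y0 - eps < ypart (latpt M u)))).
    by move=> M' t' h _ _.
  lra.
have hO : open (~` closure (cyl D t kap)) by rewrite openC; exact: closed_closure.
have [del del0 Hdel] := nbhs_ball_rv (open_nbhs_nbhs (conj hO hncl)).
have := @near_Wv R d M t u (~` closure (cyl D t kap)) (ex_intro2 _ _ del del0 Hdel).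
apply: nearMt_impl => M' t' hn hy hD.
have hy0 := hmin.
rewrite ltNge; apply/negP => hle; apply: hn; apply: subset_closure.
split; first by rewrite xpart_Wv.
rewrite ypart_Wv; apply/andP; split; first exact: ltW.
lra.
Qed.

End Main.
Section Cont.
Variable R : realType.
Variable d : nat.
Local Notation n := (d + 1)%N.

Lemma cont_at (D : set 'rV[R]_d) (M : 'M[R]_n) t (kap y0 : R) :
  bounded_set D -> inSL M -> Ffun D M t = y0%:E -> y0 < kap ->
  (forall u, latpt M u != 0 -> ~ bdry (cyl D t kap) (latpt M u)) ->
  F_continuous_at D M t.
Proof.
move=> hDb hM hF hk hyp V hV.
have Mu := inSL_unit hM.
have [Fy0 hmin] := Ffun_fin hF.
case: (Fy0) => y0pos [u0 [Yu0 Du0]].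
rewrite hF in hV; have hV' := (nbhs_EFin V y0).1 hV.
move/nbhs_ballP: hV' => [eps /= e0 He].
pose A := [set p : 'M[R]_n * 'rV[R]_d | inSL p.1 ->
   exists m, Ffun D p.1 p.2 = m%:E /\ `|y0 - m| < eps].
suff hA : nearMt M t (fun M' t' => A (M', t')).
  exists (sat A); split; first exact: sat_open.
    apply: sat_mem; apply: filterS (nearMt_nbhs hA); by case.
  move=> M' t' hO hM' _; have [g [hg hAg]] := sat_elim hO.
  have [m [hm1 hm2]] := hAg (inSL_mul hg hM').
  rewrite -(Ffun_inv D M' t' hg) hm1; apply: He.
  by rewrite -ball_normE /ball_ /=.
clear He hV V hF.
have [rho Hrho] := bounded_rho hDb.
pose iM := `|invmx M|.
have iM0 : 0 <= iM by exact: normr_ge0.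
have rho0 : 0 <= rho.
  have := Hrho _ Du0; move=> h; exact: le_trans (normr_ge0 _) h.
pose B := rho + `|t| + 1 + y0.
have B0 : 0 <= B.
  by rewrite /B; have := normr_ge0 t; lra.
pose K := (Num.truncn (2 * (n%:R * (B * iM)))).+1.
have nn0 : 0 < n%:R :> R by rewrite ltr0n addn1.
pose e1 := 1 / (2 * (n%:R * n%:R * (iM + 1))).
have e10 : 0 < e1.
  by rewrite /e1 divr_gt0 // mulr_gt0 // mulr_gt0 // ?mulr_gt0 // ltr_wpDl.
have v0n : latpt M u0 != 0.
  apply/eqP => h; move: Yu0; rewrite h /ypart !mxE => h0; by move: y0pos; rewrite -h0 ltxx.
have hcyl0 : cyl D t kap (latpt M u0).
  split => //; rewrite Yu0; apply/andP; split; lra.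
have hint : (cyl D t kap)° (latpt M u0).
  apply: contrapT => hn; apply: (hyp u0 v0n); split => //.
  exact: subset_closure.
have N1 := near_Wv t (nbhs_ball_rv hint).
have N2 : nearMt M t (fun M' t' => 0 < ypart (latpt M' u0)).
  by apply: near_Ygt; rewrite Yu0.
have N3 : nearMt M t (fun M' t' => ypart (latpt M' u0) < y0 + eps).
  by apply: near_Ylt; rewrite Yu0; lra.
have N4 := @near_dM R d M t (Num.min e1 1).
have /N4 {}N4 : 0 < Num.min e1 1 by rewrite lt_min e10 ltr01.
have N5 := @nearMt_fin R d M t _ _
  (fun f : {ffun 'I_n -> 'I_(K.*2.+1)} => @claim_u R d D M t kap y0 eps (@enc d K f)
     Mu hmin hk e0 (hyp _)).
have := nearMt_and (nearMt_and (nearMt_and (nearMt_and N1 N2) N3) N4) N5.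
apply: nearMt_impl => M' t' [[[[h1 h2] h3] [h4 h4']] h5] hM'.
rewrite /cyl /= xpart_Wv ypart_Wv in h1; case: h1 => h1 _.
have Fy : Fset D M' t' (ypart (latpt M' u0)) by split => //; exists u0.
have [m [Fm hm ->]] := Ffun_attained hDb (inSL_unit hM') Fy.
exists m; split => //.
rewrite ltr_norml; apply/andP; split; first by lra.
suff : y0 - eps < m by lra.
have [lt|le] := ltP y0 m; first by lra.
case: Fm => m0 [u [Yu Du]].
have hx : `|xpart (latpt M' u)| <= rho + `|t'|.
  have := Hrho _ Du; have := ler_normB (xpart (latpt M' u) + t') t'.
  rewrite addrK => hh1 hh2; apply: le_trans hh1 _.
  by apply: lerD.
have ht' : `|t'| <= `|t| + 1.
  have := ler_normD (t' - t) t; rewrite subrK => hh.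
  apply: le_trans hh _; rewrite addrC lerD2l; apply: ltW.
  by apply: lt_le_trans h4' _; rewrite ge_min lexx orbT.
have hl : `|latpt M' u| <= B.
  apply: le_trans (rv_norm_split _) _.
  rewrite ypart_norm Yu (ger0_norm (ltW m0)) /B.
  have hx' : `|lsubmx (latpt M' u)| <= rho + `|t'| := hx.
  lra.
have hdM : `|M' - M| <= e1.
  by apply: ltW; apply: lt_le_trans h4 _; rewrite ge_min lexx.
have hu : `|intmx R u| <= 2 * (n%:R * (B * iM)).
  have hb1 := intmx_bound u Mu.
  have hb2 := latpt_diff M' M u.
  have hb3 : `|latpt M u| <= B + n%:R * (`|intmx R u| * `|M - M'|).
    have := ler_normD (latpt M u - latpt M' u) (latpt M' u).
    rewrite subrK => hh; apply: le_trans hh _; rewrite addrC; apply: lerD => //.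
  have hX0 : 0 <= `|intmx R u| by exact: normr_ge0.
  have hdd : 0 <= `|M - M'| by exact: normr_ge0.
  have hde : `|M - M'| * (2 * (n%:R * n%:R * (iM + 1))) <= 1.
    rewrite distrC; move: hdM; rewrite /e1 ler_pdivlMr //.
    by rewrite mulr_gt0 // mulr_gt0 // ?mulr_gt0 // ltr_wpDl.
  set X := `|intmx R u| in hb1 hb3 hX0 *.
  set dl := `|M - M'| in hb3 hdd hde.
  set N := n%:R in hb1 hb3 hde nn0 *.
  set L := `|latpt M u| in hb1 hb3.
  have hL0 : 0 <= L by exact: normr_ge0.
  have s1 : X <= N * (L * iM) := hb1.
  have s2 : N * (L * iM) <= N * ((B + N * (X * dl)) * iM).
    by apply: ler_wpM2l; [exact: ltW | apply: ler_wpM2r].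
  have s3 : N * N * iM * dl <= 1 / 2.
    have : N * N * dl * (iM + 1) <= 1 / 2.
      rewrite ler_pdivlMr //; move: hde; rewrite mulrC mulrA mulrA; lra.
    have : 0 <= N * N * dl by rewrite mulr_ge0 // mulr_ge0 // ltW.
    move=> hh1 hh2; nra.
  have : X <= N * (B * iM) + (N * N * iM * dl) * X.
    apply: le_trans s1 _; apply: le_trans s2 _; rewrite le_eqVlt; apply/orP; left; apply/eqP; ring.
  move=> hh; nra.
have he : forall j, `|(u ord0 j)%:~R : R| <= K%:R.
  move=> j; apply: le_trans _ (le_trans hu (ltW (truncnS_gt _))).
  by have := mx_entry_le (intmx R u) ord0 j; rewrite /intmx mxE.
have [f hf] := @enc_surj R d K u he.
have := h5 f; rewrite -hf Yu; apply => //.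
Qed.

End Cont.
Unset Implicit Arguments.
Theorem proposition2p2 (R : realType) (d : nat) (hd : (0 < d)%N)
  (D : set 'rV[R]_d)
  (hDb : bounded_set D) (hDi : D° !=set0)
  (C : set ('M[R]_(d + 1) * 'rV[R]_d)) (hC : quot_compact D C) :
  exists kappa : R, 0 < kappa /\
    (forall M t, C (M, t) -> (Ffun D M t < kappa%:E)%E) /\
    (forall M t, C (M, t) ->
       (forall u : 'rV[int]_(d + 1), latpt M u != 0 ->
          ~ bdry (cyl D t kappa) (latpt M u)) ->
       F_continuous_at D M t).
Proof.
case: hC => hCin hCinv hCc.
have Hloc : forall p : 'M[R]_(d + 1) * 'rV[R]_d,
    exists ab : set ('M[R]_(d + 1) * 'rV[R]_d) * R, C p ->
      nbhs p ab.1 /\ forall M' t', ab.1 (M', t') -> inSL M' -> (Ffun D M' t' < ab.2%:E)%E.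
  move=> [M t]; case: (pselect (C (M, t))) => hp; last by exists (setT, 0).
  have [hM hDt] := hCin _ _ hp.
  have [b hb] := L1near hDb hM hDt.
  exists ([set p | inSL p.1 -> (Ffun D p.1 p.2 < b%:E)%E], b) => _; split.
    by apply: filterS (nearMt_nbhs hb); case.
  by move=> M' t' /= H hM'; apply: H.
have [fab Hfab] := choice Hloc.
pose U (i : 'M[R]_(d + 1) * 'rV[R]_d) := sat [set p | C i /\ (fab i).1 p].
have hcov : C `<=` \bigcup_(i in setT) U i.
  move=> [M t] hp; exists (M, t) => //; apply: sat_mem.
  have [h1 _] := Hfab _ hp.
  by apply: filterS h1 => q hq; split.
have [J [Jfin HJ]] := hCc _ U (fun i => @sat_open R d _) hcov.
have [X HX] := (finite_fsetP.1 Jfin).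
pose kap := 1 + \sum_(i <- X) `|(fab i).2|.
have kap1 : forall i, i \in X -> (fab i).2 < kap.
  move=> i iX; rewrite /kap (bigD1_seq i) //=.
  have : 0 <= \sum_(j <- X | j != i) `|(fab j).2| by apply: sumr_ge0.
  have := ler_norm (fab i).2; lra.
have hi : forall M t, C (M, t) -> (Ffun D M t < kap%:E)%E.
  move=> M t hp; have [i Ji Ui] := HJ _ hp.
  have [g [hg [Ci hAi]]] := sat_elim Ui.
  have [_ H2] := Hfab _ Ci.
  have [hM _] := hCin _ _ hp.
  have := H2 _ _ hAi (inSL_mul hg hM); rewrite Ffun_inv //.
  move=> h; apply: lt_trans h _; rewrite lte_fin; apply: kap1.
  by move: Ji; rewrite HX.
exists kap; split.
  rewrite /kap; have : 0 <= \sum_(i <- X) `|(fab i).2| by apply: sumr_ge0.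
  lra.
split => // M t hp hyp.
have [hM _] := hCin _ _ hp.
have := hi _ _ hp.
case E : (Ffun D M t) => [y| |] //.
  by rewrite lte_fin => hy; apply: (cont_at hDb hM E hy hyp).
by move: E; rewrite /Ffun; case: pselect.
Qed.
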